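(* Let $r>1$ be an integer and $\mathcal{Z}\subseteq\{1,2,\dots,r-1\}$. Define integers $\xi_1,\dots,\xi_r$ by $\xi_1=1$ and, for $2\le\ell\le r$, $\xi_\ell=\xi_{\ell-1}-1$ if $\ell-1\in\mathcal{Z}$ and $\xi_\ell=2\xi_{\ell-1}$ otherwise. Then $\mathcal{Z}$ is admissible for $(1,1,r)$ if and only if $\xi_\ell>0$ for all $\ell=1,\dots,r$.
   Context: For integers $n,\ell>0$ and a finite-support integer sequence $\mu=(\mu_i)_{i\ge1}$, $\mathsf{K}_\ell(\mu,n)=n^\ell-\sum_{i=1}^{\ell}\mu_i n^{\ell-i}$ (with $0^0=1$). With $n_0=n_1=1$, for a pair $(\eta,\omega)$ of nonnegative integer sequences $(\eta_\ell)_{\ell\ge1},(\omega_\ell)_{\ell\ge1}$ with finite support, let $\mathsf{K}^\pm_\ell=\mathsf{K}_\ell(\eta\pm\omega,n_0\pm n_1)$, let $\mathsf{r}(\eta,\omega)$ be the largest index in the union of their supports, and $\mathsf{K}^\pm=\mathsf{K}^\pm_{\mathsf{r}(\eta,\omega)}$. A subset $\mathcal{Z}\subseteq\{1,\dots,r-1\}$ is admissible for $(n_0,n_1,r)$ if there exists such a pair $(\eta,\omega)$ with $\mathsf{r}(\eta,\omega)=r$ and $\mathsf{K}^+=\mathsf{K}^-=0$ such that, for $\ell\in\{1,\dots,r-1\}$, the inequality $\mathsf{K}^+_\ell\ge|\mathsf{K}^-_\ell|$ fails exactly when $\ell\in\mathcal{Z}$. *)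

(* Defs.v *)
From mathcomp Require Import all_boot all_order all_algebra.
Set Implicit Arguments. Unset Strict Implicit. Unset Printing Implicit Defensive.
Import Order.TTheory GRing.Theory Num.Theory.
Local Open Scope ring_scope.

(* Sequences (mu_i)_{i>=1} are functions nat -> _ ; the value at index 0 is
   never used. *)

Definition Kl (mu : nat -> int) (n : int) (l : nat) : int :=
  n ^+ l - \sum_(1 <= i < l.+1) mu i * n ^+ (l - i).

Definition rdef (eta omega : nat -> nat) (r : nat) : Prop :=
  (1 <= r)%N /\ (0 < eta r + omega r)%N /\
  (forall i : nat, (r < i)%N -> eta i = 0%N /\ omega i = 0%N).

Definition Kplus (n0 n1 : nat) (eta omega : nat -> nat) (l : nat) : int :=
  Kl (fun i => (eta i)%:Z + (omega i)%:Z) (n0%:Z + n1%:Z) l.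

Definition Kminus (n0 n1 : nat) (eta omega : nat -> nat) (l : nat) : int :=
  Kl (fun i => (eta i)%:Z - (omega i)%:Z) (n0%:Z - n1%:Z) l.

(* Z (a subset of {1,...,r-1}, given as a boolean predicate) is admissible
   for (n0,n1,r). Finite support of eta, omega is implied by rdef. *)
Definition admissible (n0 n1 r : nat) (Z : pred nat) : Prop :=
  exists eta omega : nat -> nat,
    rdef eta omega r /\
    Kplus n0 n1 eta omega r = 0 /\ Kminus n0 n1 eta omega r = 0 /\
    forall l : nat, (1 <= l)%N -> (l <= r.-1)%N ->
      (~ (`|Kminus n0 n1 eta omega l| <= Kplus n0 n1 eta omega l) <-> Z l).

(* xi Z l = xi_l for l >= 1: xi_1 = 1, xi_l = xi_{l-1} - 1 if l-1 in Z,
   else 2 xi_{l-1}.  (xi Z 0 is a dummy value.) *)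
Fixpoint xi (Z : pred nat) (l : nat) : int :=
  match l with
  | 0%N => 1
  | l'.+1 => match l' with
             | 0%N => 1
             | _ => if Z l' then xi Z l' - 1 else 2 * xi Z l'
             end
  end.

(* Main.v *)
Require Import Defs.
From mathcomp Require Import all_boot all_order all_algebra.
From mathcomp Require Import zify.
Import Order.TTheory GRing.Theory Num.Theory.
Local Open Scope ring_scope.

Lemma KlS mu n l : Kl mu n l.+1 = n * Kl mu n l - mu l.+1.
Proof.
rewrite /Kl big_nat_recr //= subnn expr0 mulr1 exprS mulrBr mulr_sumr opprD addrA.
congr (_ - _ - _); apply: eq_big_nat => i /andP[_ hi].
by rewrite subSn // exprS mulrCA.
Qed.

Lemma Kp0 e o : Kplus 1 1 e o 0 = 1.
Proof. by rewrite /Kplus /Kl big_geq. Qed.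

Lemma KpS e o l : Kplus 1 1 e o l.+1 = 2 * Kplus 1 1 e o l - ((e l.+1)%:Z + (o l.+1)%:Z).
Proof. by rewrite /Kplus KlS. Qed.

Lemma KmS e o l : Kminus 1 1 e o l.+1 = (o l.+1)%:Z - (e l.+1)%:Z.
Proof. by rewrite /Kminus KlS subrr mul0r sub0r opprB. Qed.

Lemma xiS Z l : xi Z l.+2 = if Z l.+1 then xi Z l.+1 - 1 else 2 * xi Z l.+1.
Proof. by []. Qed.

Theorem lemma5 (r : nat) (Z : pred nat) :
  (1 < r)%N ->
  (forall l : nat, Z l -> (1 <= l)%N && (l <= r.-1)%N) ->
  admissible 1 1 r Z <-> (forall l : nat, (1 <= l)%N -> (l <= r)%N -> 0 < xi Z l).
Proof.
move=> r1 HZ; split.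
- case=> e [o [[_ [Hr _]] [Kr [_ HK]]]].
  set P := Kplus 1 1 e o.
  have Pdown : forall l, 0 < P l -> forall m, (m <= l)%N -> 0 < P m.
    elim=> [|l IH] hl m hm; first by move: hm; rewrite leqn0 => /eqP->.
    have hl' : 0 < P l by move: hl; rewrite /P KpS; lia.
    move: hm; rewrite leq_eqVlt => /orP[/eqP->//|]; rewrite ltnS; exact: IH.
  have Pr1 : 0 < P r.-1.
    have := KpS e o r.-1; rewrite (prednK (ltnW r1)) -/P; move: Hr Kr; rewrite /P; lia.
  have Pxi : forall l, (l <= r.-1)%N -> P l <= xi Z l.+1.
    elim=> [|l IH] hl; first by rewrite /P Kp0.
    have := IH (ltnW hl); rewrite xiS /P KpS -/P.
    have hP : 0 < P l by exact: (Pdown _ Pr1 l (ltnW hl)).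
    case hz: (Z l.+1).
    + have := HK l.+1 isT hl; rewrite hz; case=> _ /(_ isT).
      rewrite KmS /P KpS; move: hP; rewrite /P; lia.
    + rewrite /P; lia.
  move=> l l1 lr; have := Pxi l.-1; rewrite prednK //.
  have := Pdown _ Pr1 l.-1; move: l1 lr r1; clear; lia.
- move=> Hxi.
  pose e l := if l == r then absz (xi Z r) else if Z l then absz (xi Z l + 1) else 0%N.
  pose o l := if l == r then absz (xi Z r) else 0%N.
  have xr : 0 < xi Z r by apply: Hxi; lia.
  have Pxi : forall l, (l <= r.-1)%N -> Kplus 1 1 e o l = xi Z l.+1.
    elim=> [|l IH] hl; first by rewrite Kp0.
    rewrite KpS IH ?(ltnW hl) // xiS /e /o.
    have -> : (l.+1 == r) = false by apply/negbTE; lia.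
    have := Hxi l.+1 isT (leq_trans hl (leq_pred r)).
    case: (Z l.+1) => /= h; lia.
  exists e, o; split; [|split; [|split]].
  + split; first lia.
    split; first by rewrite /e /o eqxx; lia.
    move=> i ri; rewrite /e /o.
    have -> : (i == r) = false by apply/negbTE; lia.
    case hz: (Z i) => //; have := HZ i hz; lia.
  + have h := Pxi r.-1 (leqnn _); have := KpS e o r.-1; rewrite h (prednK (ltnW r1)) /e /o eqxx => ->; lia.
  + have := KmS e o r.-1; rewrite (prednK (ltnW r1)) /e /o eqxx => ->; lia.
  + case=> [//|l] _ hl; rewrite KmS Pxi // xiS /e /o.
    have -> : (l.+1 == r) = false by apply/negbTE; lia.
    have := Hxi l.+1 isT (leq_trans hl (leq_pred r)).
    case: (Z l.+1) => /= h; split; lia.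
Qed.
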